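(* Let $\mathcal X$ be an instance space and let $\mathcal H$ be a class of classifiers $\mathcal X\to\{0,1\}$ of finite VC dimension. Consider two disjoint demographic groups $A$ and $B$ (group membership is observed), a group-$B$ proportion $r\in(0,1)$, distributions $\mathcal D_A,\mathcal D_B$ on $\mathcal X$, and classifiers $h_A^*,h_B^*\in\mathcal H$ such that $$p:=\Pr_{x\sim\mathcal D_A}[h_A^*(x)=1]=\Pr_{x\sim\mathcal D_B}[h_B^*(x)=1],\qquad p\in(0,1].$$ Let $\eta\in[0,1/2)$, $\beta_{POS},\beta_{NEG}\in(0,1]$, $\nu\in[0,1)$, and let the true and biased distributions be as described in the context. Assume $$(1-r)(1-2\eta)+r\big((1-\eta)\beta_{POS}(1-2\nu)-\eta\beta_{NEG}\big)>0$$ and $$(1-r)(1-2\eta)+r\big((1-\eta)\beta_{NEG}-(1-2\nu)\beta_{POS}\,\eta\big)>0.$$ Then $h^*=(h_A^*,h_B^* )$ satisfies Equal Opportunity on the biased distribution and has the lowest biased error among all pairs of classifiers $(h_A,h_B)$ satisfying Equal Opportunity on the biased distribution; thus $h^*$ is recovered by Equal-Opportunity-constrained ERM on the biased distribution.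
   Context: True distribution: an example is generated by first drawing the group, $B$ with probability $r$ and $A$ with probability $1-r$; then $x\sim\mathcal D_B$ (resp. $\mathcal D_A$); then, writing $h^*(x)=h_g^*(x)$ for the group $g$ of $x$, the true label is $y=1-h^*(x)$ with probability $\eta$ and $y=h^*(x)$ otherwise, independently. Biased distribution: starting from a true example $(x,y)$, if $x\in B$ and $y=1$ the example is kept with probability $\beta_{POS}$ (discarded otherwise), if $x\in B$ and $y=0$ it is kept with probability $\beta_{NEG}$, and examples of group $A$ are always kept; then each kept example with $x\in B$ and $y=1$ has its label flipped to $0$ independently with probability $\nu$. The biased distribution is the distribution of the kept examples with their (possibly flipped) observed labels. A classifier is a pair $h=(h_A,h_B)$ of functions $\mathcal X\to\{0,1\}$, predicting $h_g(x)$ on an example of group $g$. Its biased error is the probability, under the biased distribution, that its prediction differs from the observed label. $h$ satisfies Equal Opportunity on a distribution if $\Pr[h_A(x)=1\mid y=1,x\in A]=\Pr[h_B(x)=1\mid y=1,x\in B]$ under that distribution (with $y$ the label in that distribution). *)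

(* Defs.v *)
From HB Require Import structures.
From mathcomp Require Import all_boot all_order all_algebra.
From mathcomp Require Import all_classical all_reals all_analysis.
Set Implicit Arguments. Unset Strict Implicit. Unset Printing Implicit Defensive.
Import Order.TTheory GRing.Theory Num.Theory.
Local Open Scope ring_scope.
Local Open Scope classical_set_scope.

Section VC.
Context {X : eqType}.
Definition shatters (H : set (X -> bool)) (S : seq X) : Prop :=
  forall f : X -> bool, exists2 h, H h & forall x, x \in S -> h x = f x.
Definition finite_VC (H : set (X -> bool)) : Prop :=
  exists d : nat, forall S : seq X, uniq S -> shatters H S -> (size S <= d)%N.
End VC.

Inductive group := GA | GB.

Section Model.
Context {R : realType} {d : measure_display} {X : measurableType d}.

Record model := Model {
  m_r : R;
  m_eta : R;
  m_bPOS : R;           (* keep prob. of positive group-B examples *)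
  m_bNEG : R;           (* keep prob. of negative group-B examples *)
  m_nu : R;             (* flip prob. of kept positive group-B examples *)
  m_DA : probability X R;
  m_DB : probability X R;
  m_hA : X -> bool;
  m_hB : X -> bool
}.

Variable M : model.

Definition grp_prob (g : group) : R :=
  match g with GA => 1 - m_r M | GB => m_r M end.
Definition grp_dist (g : group) : probability X R :=
  match g with GA => m_DA M | GB => m_DB M end.
Definition hstar (g : group) : X -> bool :=
  match g with GA => m_hA M | GB => m_hB M end.

Definition true_label_prob (g : group) (x : X) (yt : bool) : R :=
  if yt == hstar g x then 1 - m_eta M else m_eta M.

(** Probability that a true example of group g with true label yt is kept
    and ends up with observed label yo. *)
Definition keep_obs (g : group) (yt yo : bool) : R :=
  match g with
  | GA => (yt == yo)%:R
  | GB => match yt, yo with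
          | true, true => m_bPOS M * (1 - m_nu M)
          | true, false => m_bPOS M * m_nu M
          | false, false => m_bNEG M
          | false, true => 0
          end
  end.

(** Probability, under the TRUE process, that the example has group g,
    satisfies Q (a predicate on x), is kept, and has observed label yo. *)
Definition kept_mass (g : group) (Q : X -> bool) (yo : bool) : R :=
  grp_prob g * Rintegral (grp_dist g) setT
    (fun x => (Q x)%:R *
       (true_label_prob g x true * keep_obs g true yo
        + true_label_prob g x false * keep_obs g false yo)).

Definition kept_total : R :=
  kept_mass GA predT true + kept_mass GA predT false
  + kept_mass GB predT true + kept_mass GB predT false.

(** Biased distribution = true process conditioned on being kept:
    Pr_biased[group = g, Q x, observed label = yo]. *)
Definition biased_prob (g : group) (Q : X -> bool) (yo : bool) : R :=
  kept_mass g Q yo / kept_total.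

(** A classifier is a pair (h_A, h_B), represented as a function of the group. *)
Definition classifier := group -> X -> bool.

Definition biased_error (h : classifier) : R :=
  biased_prob GA (fun x => h GA x != true) true
  + biased_prob GA (fun x => h GA x != false) false
  + biased_prob GB (fun x => h GB x != true) true
  + biased_prob GB (fun x => h GB x != false) false.

Definition biased_TPR (h : classifier) (g : group) : R :=
  biased_prob g (h g) true / biased_prob g predT true.

Definition biased_EO (h : classifier) : Prop :=
  biased_TPR h GA = biased_TPR h GB.

End Model.

Definition measurable_classifier {d : measure_display} {X : measurableType d}
  (h : X -> bool) : Prop := measurable [set x | h x].

(* Main.v *)
Require Import Defs.
From HB Require Import structures.
From mathcomp Require Import all_boot all_order all_algebra.
From mathcomp Require Import all_classical all_reals all_analysis.
From mathcomp Require Import ring lra.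
Import Order.TTheory GRing.Theory Num.Theory.
Local Open Scope ring_scope.
Local Open Scope classical_set_scope.

Lemma memQ (T:Type) (Q:T->bool) x : (x \in [set x | Q x]) = Q x.
Proof. by apply/idP/idP; rewrite in_setE. Qed.

Section H.
Context {R : realType} {d : measure_display} {X : measurableType d} (P : probability X R).

Definition mu (Q : X -> bool) : R := Rintegral P setT (fun x => (Q x)%:R).

Lemma int_ind (Q : X -> bool) c : measurable [set x | Q x] ->
  P.-integrable setT (EFin \o (fun x => c * (Q x)%:R)).
Proof.
move=> mQ.
apply: (eq_integrable measurableT _ _ _ (integrableZl measurableT c (integrable_indic P mQ))).
move=> x _ /=; rewrite -EFinM indicE; case: (boolP (Q x)) => qx.
  by rewrite mem_set.
by rewrite memNset //; apply/negP.
Qed.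


Lemma muE (Q : X -> bool) : measurable [set x | Q x] -> mu Q = fine (P [set x | Q x]).
Proof.
move=> mQ; rewrite /mu /Rintegral.
rewrite (eq_integral (fun x => (\1_[set x | Q x] x)%:E)).
  by rewrite integral_indic // setIT.
move=> x _; rewrite indicE; case: (boolP (Q x)) => qx.
  by rewrite mem_set.
by rewrite memNset //; apply/negP.
Qed.

Lemma mu_ge0 (Q : X -> bool) : 0 <= mu Q.
Proof. by apply: Rintegral_ge0 => x _; rewrite ler0n. Qed.

Lemma muT : mu predT = 1.
Proof. rewrite /mu (_ : (fun x => (predT x)%:R) = fun=> 1) // Rintegral_cst //. rewrite mul1r -[RHS]/(fine 1%E); congr fine; exact: probability_setT. Qed.

Lemma mu_split (Q h : X -> bool) : measurable [set x | Q x] -> measurable [set x | h x] ->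
  mu Q = mu (fun x => Q x && h x) + mu (fun x => Q x && ~~ h x).
Proof.
move=> mQ mh.
have mQh : measurable [set x | Q x && h x].
  rewrite (_ : [set x | Q x && h x] = [set x | Q x] `&` [set x | h x]).
    exact: measurableI.
  by apply/seteqP; split => x /= /andP.
have mQnh : measurable [set x | Q x && ~~ h x].
  rewrite (_ : [set x | Q x && ~~ h x] = [set x | Q x] `&` ~` [set x | h x]).
    by apply: measurableI => //; exact: measurableC.
  by apply/seteqP; split => x /=; [move/andP=> [-> /negP]|move=> [-> /negP ->]].
rewrite /mu -RintegralD //; last 2 first.
- by have := int_ind _ 1 mQh; apply: eq_integrable => // x _ /=; rewrite mul1r.
- by have := int_ind _ 1 mQnh; apply: eq_integrable => // x _ /=; rewrite mul1r.
by apply: eq_Rintegral => x _; case: (Q x); case: (h x); rewrite /= ?add0r ?addr0.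
Qed.

Lemma mu_ext (Q Q' : X -> bool) : (forall x, Q x = Q' x) -> mu Q = mu Q'.
Proof. by move=> e; apply: eq_Rintegral => x _; rewrite e. Qed.

Lemma mu0 : mu (fun _ => false) = 0.
Proof. by rewrite /mu Rintegral_cst // mul0r. Qed.

Lemma int_if (Q h : X -> bool) u v : measurable [set x | Q x] -> measurable [set x | h x] ->
  Rintegral P setT (fun x => (Q x)%:R * (if h x then u else v))
  = u * mu (fun x => Q x && h x) + v * mu (fun x => Q x && ~~ h x).
Proof.
move=> mQ mh.
have mQh : measurable [set x | Q x && h x].
  rewrite (_ : [set x | Q x && h x] = [set x | Q x] `&` [set x | h x]).
    exact: measurableI.
  by apply/seteqP; split => x /= /andP.
have mQnh : measurable [set x | Q x && ~~ h x].
  rewrite (_ : [set x | Q x && ~~ h x] = [set x | Q x] `&` ~` [set x | h x]).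
    by apply: measurableI => //; exact: measurableC.
  by apply/seteqP; split => x /=; [move/andP=> [-> /negP]|move=> [-> /negP ->]].
have i1 := int_ind _ 1 mQh.
have i2 := int_ind _ 1 mQnh.
rewrite /mu -RintegralZl //; last by apply: eq_integrable i1 => // x _ /=; rewrite mul1r.
rewrite -RintegralZl //; last by apply: eq_integrable i2 => // x _ /=; rewrite mul1r.
rewrite -RintegralD //; last 2 first.
- by apply: eq_integrable (int_ind _ u mQh) => // x _ /=.
- by apply: eq_integrable (int_ind _ v mQnh) => // x _ /=.
by apply: eq_Rintegral => x _; case: (Q x); case: (h x); rewrite /= ?mul0r ?mulr0 ?mulr1 ?mul1r ?add0r ?addr0.
Qed.
End H.

Lemma meas_ext d (X : measurableType d) (Q Q' : X -> bool) :
  measurable [set x | Q x] -> (forall x, Q x = Q' x) -> measurable [set x | Q' x].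
Proof. by move=> mQ e; rewrite (_ : [set x | Q' x] = [set x | Q x]) //; apply/seteqP; split => x /=; rewrite e. Qed.

Lemma meas_neg d (X : measurableType d) (Q : X -> bool) :
  measurable [set x | Q x] -> measurable [set x | ~~ Q x].
Proof.
move=> mQ; rewrite (_ : [set x | ~~ Q x] = ~` [set x | Q x]); first exact: measurableC.
by apply/seteqP; split => x /=; move/negP.
Qed.

Lemma kept_massE (R : realType) d (X : measurableType d) (M : model) g (Q : X -> bool) yo :
  measurable [set x | Q x] -> measurable [set x | hstar M g x] ->
  kept_mass M g Q yo = grp_prob M g *
   (((1 - m_eta M) * keep_obs M g true yo + m_eta M * keep_obs M g false yo)
       * mu (grp_dist M g) (fun x => Q x && hstar M g x)
    + (m_eta M * keep_obs M g true yo + (1 - m_eta M) * keep_obs M g false yo)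
       * mu (grp_dist M g) (fun x => Q x && ~~ hstar M g x) : R).
Proof.
move=> mQ mh; rewrite /kept_mass -int_if //; congr (_ * _).
by apply: eq_Rintegral => x _; rewrite /true_label_prob; case: (hstar M g x).
Qed.



Lemma mu_notT {R : realType} {d} {X : measurableType d} (P : probability X R) (Q h : X -> bool) :
  measurable [set x | Q x] -> measurable [set x | h x] ->
  mu P (fun x => (Q x != true) && h x) = mu P h - mu P (fun x => Q x && h x).
Proof.
move=> mQ mh; rewrite (mu_split P h Q mh mQ).
rewrite (mu_ext P (fun x => (Q x != true) && h x) (fun x => h x && ~~ Q x)); last by move=> x; case: (Q x); case: (h x).
rewrite (mu_ext P (fun x => Q x && h x) (fun x => h x && Q x)); last by move=> x; case: (Q x); case: (h x).
by lra.
Qed.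

Lemma mu_notT2 {R : realType} {d} {X : measurableType d} (P : probability X R) (Q h : X -> bool) :
  measurable [set x | Q x] -> measurable [set x | h x] ->
  mu P (fun x => (Q x != true) && ~~ h x) = (1 - mu P h) - mu P (fun x => Q x && ~~ h x).
Proof.
move=> mQ mh; have mnh := @meas_neg _ _ _ mh.
rewrite (mu_notT P Q (fun x => ~~ h x) mQ mnh); congr (_ - _).
rewrite -(muT P) (mu_split P predT h) //; last first.
  by rewrite (_ : [set x | predT x] = setT) //; apply/seteqP; split.
rewrite (mu_ext P (fun x => predT x && h x) h) //.
rewrite (mu_ext P (fun x => predT x && ~~ h x) (fun x => ~~ h x)) //.
by lra.
Qed.

Lemma mu_T1 {R : realType} {d} {X : measurableType d} (P : probability X R) (h : X -> bool) :
  mu P (fun x => predT x && h x) = mu P h.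
Proof. by apply: mu_ext. Qed.

Lemma mu_T0 {R : realType} {d} {X : measurableType d} (P : probability X R) (h : X -> bool) :
  measurable [set x | h x] ->
  mu P (fun x => predT x && ~~ h x) = 1 - mu P h.
Proof.
move=> mh; rewrite -(muT P) (mu_split P predT h) //; last first.
  by rewrite (_ : [set x | predT x] = setT) //; apply/seteqP; split.
by rewrite (mu_ext P (fun x => predT x && h x) h) //; lra.
Qed.

Definition ERR {R : realType} (r e bP bN n p a1 a0 b1 b0 : R) : R :=
  (1-r)*((1-e)*(p-a1)+e*((1-p)-a0)+(e*a1+(1-e)*a0)) + r*(bP*(1-n)*((1-e)*(p-b1)+e*((1-p)-b0)) + (((1-e)*(bP*n)+e*bN)*b1+(e*(bP*n)+(1-e)*bN)*b0)).

Lemma core {R : realType} (r e bP bN n p a1 a0 b1 b0 : R) :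
  0 < r < 1 -> 0 <= e < 1/2 -> 0 < bN -> 
  0 < (1 - r) * (1 - 2 * e) + r * ((1 - e) * bP * (1 - 2 * n) - e * bN) ->
  0 < (1 - r) * (1 - 2 * e) + r * ((1 - e) * bN - (1 - 2 * n) * bP * e) ->
  0 <= a0 -> 0 <= b0 -> a1 <= p -> b1 <= p ->
  (1-e)*a1+e*a0 = (1-e)*b1+e*b0 ->
  ERR r e bP bN n p p 0 p 0 <= ERR r e bP bN n p a1 a0 b1 b0.
Proof.
move=> /andP[r0 r1] /andP[e0 e1] bN0 h1 h2 a00 b00 a1p b1p teq.
set al := (1-r)*(1-2*e).
set K1 := (1-e)*bP*(1-2*n) - e*bN.
set c := r*bN*(1-2*e).
have al0 : 0 <= al by rewrite /al; apply: mulr_ge0; lra.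
have c0 : 0 <= c by rewrite /c; apply: mulr_ge0; [apply: mulr_ge0|]; lra.
have L0 : 0 < al + r * K1 by rewrite /al /K1; lra.
have id1 : (1-e) * (ERR r e bP bN n p a1 a0 b1 b0 - ERR r e bP bN n p p 0 p 0)
   = - (al + r * K1) * (((1-e)*a1+e*a0) - (1-e)* p) + al * a0 + c * b0.
  have -> : - (al + r * K1) * (((1-e)*a1+e*a0) - (1-e)* p) = - al * (((1-e)*a1+e*a0) - (1-e)* p) - r * K1 * (((1-e)*b1+e*b0) - (1-e)* p).
    by rewrite teq; ring.
  by rewrite /ERR /al /K1 /c; ring.
have Lc : (al + r * K1) * e <= al + c.
  have h2' : 0 <= (1 - e) * ((1 - r) * (1 - 2 * e) + r * ((1 - e) * bN - (1 - 2 * n) * bP * e)).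
    by apply: mulr_ge0; lra.
  have -> : al + c = (al + r * K1) * e + (1 - e) * ((1 - r) * (1 - 2 * e) + r * ((1 - e) * bN - (1 - 2 * n) * bP * e)).
    by rewrite /al /c /K1; ring.
  lra.
suff : 0 <= (1-e) * (ERR r e bP bN n p a1 a0 b1 b0 - ERR r e bP bN n p p 0 p 0).
  by rewrite pmulr_rge0 ?subr_ge0 //; lra.
rewrite id1.
have [tle|tgt] := lerP ((1-e)*a1+e*a0) ((1-e)* p).
  have : 0 <= - (al + r * K1) * (((1-e)*a1+e*a0) - (1-e)* p).
    by rewrite mulNr -mulrN; apply: mulr_ge0; lra.
  have : 0 <= al * a0 by apply: mulr_ge0.
  have : 0 <= c * b0 by apply: mulr_ge0.
  lra.
have sa : ((1-e)*a1+e*a0) - (1-e)* p <= e * a0.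
  have : (1-e)*a1 <= (1-e)* p by apply: ler_wpM2l; lra.
  lra.
have sb : ((1-e)*a1+e*a0) - (1-e)* p <= e * b0.
  have : (1-e)*b1 <= (1-e)* p by apply: ler_wpM2l; lra.
  rewrite teq; lra.
have [ab|ba] := lerP a0 b0.
  have s1 : (al + r * K1) * (((1-e)*a1+e*a0) - (1-e)* p) <= (al + r * K1) * (e * a0) by apply: ler_wpM2l; lra.
  have s2 : (al + r * K1) * e * a0 <= (al + c) * a0 by apply: ler_wpM2r.
  have s3 : c * a0 <= c * b0 by apply: ler_wpM2l.
  rewrite mulrA in s1.
  have : (al + c) * a0 = al * a0 + c * a0 by ring.
  rewrite mulNr; lra.
have s1 : (al + r * K1) * (((1-e)*a1+e*a0) - (1-e)* p) <= (al + r * K1) * (e * b0) by apply: ler_wpM2l; lra.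
have s2 : (al + r * K1) * e * b0 <= (al + c) * b0 by apply: ler_wpM2r.
have s3 : al * b0 <= al * a0 by apply: ler_wpM2l => //; lra.
rewrite mulrA in s1.
have : (al + c) * b0 = al * b0 + c * b0 by ring.
rewrite mulNr; lra.
Qed.

Lemma fracE {R : realType} (k c D u : R) : k != 0 -> c != 0 -> D != 0 ->
  (c * u / k) / (c * D / k) = u / D.
Proof. by move=> k0 c0 D0; field; rewrite k0 c0 D0. Qed.

Lemma mu_le {R : realType} {d} {X : measurableType d} (P : probability X R) (Q h : X -> bool) :
  measurable [set x | Q x] -> measurable [set x | h x] ->
  mu P (fun x => Q x && h x) <= mu P h.
Proof.
move=> mQ mh; rewrite (mu_split P h Q mh mQ).
rewrite (mu_ext P (fun x => Q x && h x) (fun x => h x && Q x)); last by move=> x; case: (Q x); case: (h x).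
have := mu_ge0 P (fun x => h x && ~~ Q x); lra.
Qed.

Theorem mainTheorem1 (R : realType) (d : measure_display) (X : measurableType d)
  (H : set (X -> bool)) (r eta bPOS bNEG nu : R)
  (DA DB : probability X R) (hA hB : X -> bool) :
  finite_VC H ->
  (forall h, H h -> measurable_classifier h) ->
  H hA -> H hB ->
  0 < r < 1 ->
  (DA [set x | hA x] = DB [set x | hB x])%E ->
  (0%E < DA [set x | hA x])%E ->
  0 <= eta < 1 / 2 ->
  0 < bPOS <= 1 -> 0 < bNEG <= 1 ->
  0 <= nu < 1 ->
  0 < (1 - r) * (1 - 2 * eta)
      + r * ((1 - eta) * bPOS * (1 - 2 * nu) - eta * bNEG) ->
  0 < (1 - r) * (1 - 2 * eta)
      + r * ((1 - eta) * bNEG - (1 - 2 * nu) * bPOS * eta) ->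
  let M := Model r eta bPOS bNEG nu DA DB hA hB in
  let hstar : classifier := fun g => match g with GA => hA | GB => hB end in
  biased_EO M hstar /\
  (forall hA' hB' : X -> bool,
     measurable_classifier hA' -> measurable_classifier hB' ->
     let h : classifier := fun g => match g with GA => hA' | GB => hB' end in
     biased_EO M h -> biased_error M hstar <= biased_error M h).
Proof.
move=> fVC Hm HA HB /andP[r0 r1] eqp p0 /andP[e0 e1] /andP[bP0 bP1] /andP[bN0 bN1] /andP[n0 n1] hyp1 hyp2 M hs.
have mA : measurable [set x | hA x] := Hm _ HA.
have mB : measurable [set x | hB x] := Hm _ HB.
set pA := mu DA hA.
have EA : forall (Q : X -> bool), measurable [set x | Q x] ->
  kept_mass M GA Q true = (1 - r) * ((1 - eta) * mu DA (fun x => Q x && hA x) + eta * mu DA (fun x => Q x && ~~ hA x)).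
  by move=> Q mQ; rewrite kept_massE //=; ring.
have EA0 : forall (Q : X -> bool), measurable [set x | Q x] ->
  kept_mass M GA Q false = (1 - r) * (eta * mu DA (fun x => Q x && hA x) + (1 - eta) * mu DA (fun x => Q x && ~~ hA x)).
  by move=> Q mQ; rewrite kept_massE //=; ring.
have EB : forall (Q : X -> bool), measurable [set x | Q x] ->
  kept_mass M GB Q true = (r * (bPOS * (1 - nu))) * ((1 - eta) * mu DB (fun x => Q x && hB x) + eta * mu DB (fun x => Q x && ~~ hB x)).
  by move=> Q mQ; rewrite kept_massE //=; ring.
have EB0 : forall (Q : X -> bool), measurable [set x | Q x] ->
  kept_mass M GB Q false = r * (((1 - eta) * (bPOS * nu) + eta * bNEG) * mu DB (fun x => Q x && hB x) + (eta * (bPOS * nu) + (1 - eta) * bNEG) * mu DB (fun x => Q x && ~~ hB x)).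
  by move=> Q mQ; rewrite kept_massE //=; ring.
have mT : measurable [set x : X | predT x].
  by rewrite (_ : [set x | predT x] = setT) //; apply/seteqP; split.
set pB := mu DB hB.
have eqAB : pA = pB by rewrite /pA /pB !muE // eqp.
have pA0 : 0 < pA.
  rewrite /pA muE //; apply: fine_gt0; rewrite p0 /=.
  by apply: (le_lt_trans (probability_le1 DA mA)); rewrite ltry.
have pA1 : pA <= 1.
  have := mu_T0 DA hA mA; have := mu_ge0 DA (fun x => predT x && ~~ hA x); rewrite -/pA; lra.
set kt := kept_total M.
have ktE : kt = (1 - r) + (kept_mass M GB predT true + kept_mass M GB predT false).
  rewrite /kt /kept_total EA // EA0 // mu_T1 mu_T0 // -/pA; ring.
have kt0 : 0 < kt.
  rewrite ktE EB // EB0 //.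
  have : 0 <= r * (bPOS * (1 - nu)) *
    ((1 - eta) * mu DB (fun x => predT x && hB x) + eta * mu DB (fun x => predT x && ~~ hB x)) +
    r * (((1 - eta) * (bPOS * nu) + eta * bNEG) * mu DB (fun x => predT x && hB x) +
     (eta * (bPOS * nu) + (1 - eta) * bNEG) * mu DB (fun x => predT x && ~~ hB x)).
    by repeat first [exact: mu_ge0 | lra | apply: mulr_ge0 | apply: addr_ge0].
  lra.
have kt0' : kt != 0 by rewrite gt_eqF.
have DA0 : 0 < (1 - eta) * pA + eta * (1 - pA).
  have : 0 < (1-eta)*pA by apply: mulr_gt0; lra.
  have : 0 <= eta*(1-pA) by apply: mulr_ge0; lra.
  lra.
have nf : forall f : X -> bool, (fun x => f x != false) = f.
  by move=> f; apply: funext => x; case: (f x).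
have gen : forall hA' hB' : X -> bool, measurable_classifier hA' -> measurable_classifier hB' ->
  let h : classifier := fun g => match g with GA => hA' | GB => hB' end in
  biased_error M h * kt = ERR r eta bPOS bNEG nu pA (mu DA (fun x => hA' x && hA x)) (mu DA (fun x => hA' x && ~~ hA x)) (mu DB (fun x => hB' x && hB x)) (mu DB (fun x => hB' x && ~~ hB x))
  /\ (biased_EO M h <-> (1-eta) * mu DA (fun x => hA' x && hA x) + eta * mu DA (fun x => hA' x && ~~ hA x) = (1-eta) * mu DB (fun x => hB' x && hB x) + eta * mu DB (fun x => hB' x && ~~ hB x)).
  move=> hA' hB' mA' mB' h; rewrite /measurable_classifier in mA' mB'.
  have mnA' : measurable [set x | hA' x != true].
    by apply: (@meas_ext _ _ _ _ (@meas_neg _ _ _ mA')) => x; case: (hA' x).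
  have mnB' : measurable [set x | hB' x != true].
    by apply: (@meas_ext _ _ _ _ (@meas_neg _ _ _ mB')) => x; case: (hB' x).
  split.
    rewrite /biased_error /biased_prob -!mulrDl divfK // /h /= !nf.
    rewrite EA // EA0 // EB // EB0 //.
    rewrite (mu_notT DA hA' hA) // (mu_notT2 DA hA' hA) // (mu_notT DB hB' hB) // (mu_notT2 DB hB' hB) //.
    rewrite -/pA -/pB -eqAB /ERR; ring.
  rewrite /biased_EO /biased_TPR /biased_prob /h /=.
  rewrite (EA hA') // (EA predT) // (EB hB') // (EB predT) // !mu_T1 !mu_T0 // -/pA -/pB -eqAB.
  have cA0 : 1 - r != 0 by rewrite gt_eqF //; lra.
  have cB0 : r * (bPOS * (1 - nu)) != 0.
    by rewrite gt_eqF //; apply: mulr_gt0 => //; apply: mulr_gt0 => //; lra.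
  have DA0' : (1 - eta) * pA + eta * (1 - pA) != 0 by rewrite gt_eqF.
  rewrite -/kt (fracE _ _ _ _ kt0' cA0 DA0') (fracE _ _ _ _ kt0' cB0 DA0').
  split; last by move=> ->.
  by move=> E; have := congr1 (fun z => z * ((1 - eta) * pA + eta * (1 - pA))) E; rewrite /= !divfK.
have sA1 : mu DA (fun x => hA x && hA x) = pA by apply: mu_ext => x; case: (hA x).
have sA0 : mu DA (fun x => hA x && ~~ hA x) = 0 by rewrite -(mu0 DA); apply: mu_ext => x; case: (hA x).
have sB1 : mu DB (fun x => hB x && hB x) = pA by rewrite eqAB; apply: mu_ext => x; case: (hB x).
have sB0 : mu DB (fun x => hB x && ~~ hB x) = 0 by rewrite -(mu0 DB); apply: mu_ext => x; case: (hB x).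
have [E0 EO0] := gen hA hB mA mB.
rewrite sA1 sA0 sB1 sB0 in E0 EO0.
split; first by apply/EO0.
move=> hA' hB' mA' mB' h EOh.
have [E1 EO1] := gen hA' hB' mA' mB'.
have teq := (proj1 EO1) EOh.
rewrite -(ler_pM2r kt0) E0 E1.
apply: core => //.
- by rewrite r0 r1.
- by rewrite e0 e1.
- exact: mu_ge0.
- exact: mu_ge0.
- exact: mu_le.
- by rewrite eqAB; exact: mu_le.
Qed.
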